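(* Let $H\in\mathbb{R}^{d\times d}$ be symmetric positive definite, $q\in\mathbb{R}^d$ and $\theta_*=H^{-1}q$. For each $n\ge 1$ let $P_n,Q_n,R_n\in\mathbb{R}[X]$ be polynomials, and set $A_n=P_n(H)$, $B_n=Q_n(H)$, $c_n=R_n(H)q$. Assume: (i) ($\theta_*$-stationarity) $\theta_*=A_n\theta_*+B_n\theta_*+c_n$ for all $n\ge 1$; (ii) ($n$-scalability) there exist matrices $A,B\in\mathbb{R}^{d\times d}$ such that $A_n=\frac{n}{n+1}A$ and $B_n=\frac{n-1}{n+1}B$ for all $n\ge 1$. Then there exist polynomials $\bar A,\bar B\in\mathbb{R}[X]$ such that for all $n\ge1$: $$A_n=\frac{2n}{n+1}\Big(I-\frac{\bar A(H)+\bar B(H)}{2}H\Big),\qquad B_n=-\frac{n-1}{n+1}\big(I-\bar B(H)H\big),\qquad c_n=\frac{n\bar A(H)+\bar B(H)}{n+1}\,q.$$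
   Context: These matrices define the second-order iterative algorithm $\theta_{n+1}=A_n\theta_n+B_n\theta_{n-1}+c_n$ (with $\theta_1=\theta_0\in\mathbb{R}^d$) for minimizing $f(\theta)=\frac12\langle\theta,H\theta\rangle-\langle q,\theta\rangle$, whose minimizer is $\theta_*=H^{-1}q$. *)

(* Defs.v *)
From HB Require Import structures.
From mathcomp Require Export all_boot all_order all_algebra.
Set Implicit Arguments. Unset Strict Implicit. Unset Printing Implicit Defensive.
Export Order.TTheory GRing.Theory Num.Theory.

(* Main.v *)
Require Import Defs.
From HB Require Import structures.
From mathcomp Require Import all_boot all_order all_algebra.
From mathcomp Require Import ring.
Import Order.TTheory GRing.Theory Num.Theory.
Local Open Scope ring_scope.

Lemma hinv_ex (R : realFieldType) (d : nat) (H : 'M[R]_d.+1)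
  (Hpd : forall v : 'cV[R]_d.+1, v != 0 -> 0 < (v^T *m H *m v) 0 0) :
  exists h : {poly R}, horner_mx H h *m H = 1%:M /\ invmx H = horner_mx H h.
Proof.
have detH : \det H != 0.
  apply/negP => /det0P [v nv vH].
  suff: v^T != 0 by move/Hpd; rewrite trmxK vH mul0mx mxE ltxx.
  by apply: contra nv => /eqP /(congr1 trmx); rewrite trmxK trmx0 => ->.
set p := char_poly H.
have c0 : p`_0 != 0.
  by rewrite /p char_poly_det mulf_eq0 negb_or detH andbT signr_eq0.
have tk : take_poly 1 p = (p`_0)%:P.
  by apply/polyP => i; rewrite coef_take_poly coefC; case: i.
have CH := Cayley_Hamilton H.
rewrite -/p -(poly_take_drop 1 p) tk rmorphD rmorphM /= horner_mx_C expr1 horner_mx_X in CH.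
exists (- (p`_0)^-1 *: drop_poly 1 p).
have hH : horner_mx H (- (p`_0)^-1 *: drop_poly 1 p) *m H = 1%:M.
  rewrite linearZ /= -scalemxAl.
  have -> : horner_mx H (drop_poly 1 p) *m H = - (p`_0)%:M.
    by apply/eqP; rewrite -addr_eq0 addrC mulmxE CH.
  by rewrite scalerN scaleNr opprK scale_scalar_mx mulVf.
split => //.
have [Hu _] := mulmx1_unit (mulmx1C hH).
by rewrite -[invmx H]mulmx1 -(mulmx1C hH) mulmxA mulVmx // mul1mx.
Qed.

Theorem theorem1 (R : realFieldType) (d : nat)
  (H : 'M[R]_d.+1) (q : 'cV[R]_d.+1)
  (P Q Rc : nat -> {poly R})
  (Hsym : H^T = H)
  (Hpd : forall v : 'cV[R]_d.+1, v != 0 -> 0 < (v^T *m H *m v) 0 0)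
  (Hstat : forall n : nat, (0 < n)%N ->
     invmx H *m q =
       horner_mx H (P n) *m (invmx H *m q)
       + horner_mx H (Q n) *m (invmx H *m q)
       + horner_mx H (Rc n) *m q)
  (Hscal : exists A B : 'M[R]_d.+1, forall n : nat, (0 < n)%N ->
     horner_mx H (P n) = (n%:R / n.+1%:R) *: A /\
     horner_mx H (Q n) = ((n%:R - 1) / n.+1%:R) *: B) :
  exists Abar Bbar : {poly R}, forall n : nat, (0 < n)%N ->
    [/\ horner_mx H (P n) =
          (2 * n%:R / n.+1%:R) *:
            (1%:M - (2^-1 *: (horner_mx H Abar + horner_mx H Bbar)) *m H),
        horner_mx H (Q n) =
          - ((n%:R - 1) / n.+1%:R) *: (1%:M - horner_mx H Bbar *m H)
      & horner_mx H (Rc n) *m q =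
          (n.+1%:R^-1 *: (n%:R *: horner_mx H Abar + horner_mx H Bbar)) *m q].
Proof.
have [h [hH hE]] := @hinv_ex _ _ H Hpd.
have [A [B HAB]] := Hscal.
set hM := horner_mx H h in hH hE.
have eA : horner_mx H (2 *: P 1%N) = A.
  rewrite linearZ /=; have [-> _] := HAB 1%N isT.
  by rewrite scalerA -[X in _ = X]scale1r; congr (_ *: _); field.
have eB : horner_mx H (3 *: Q 2%N) = B.
  rewrite linearZ /=; have [_ ->] := HAB 2%N isT.
  by rewrite scalerA -[X in _ = X]scale1r; congr (_ *: _); field.
set Bbar := (1 + 3 *: Q 2%N) * h.
set Abar := (2%:P - 2 *: P 1%N) * h - Bbar.
have eBb : horner_mx H Bbar = (1%:M + B) *m hM.
  by rewrite /Bbar rmorphM rmorphD /= eB rmorph1 mulmxE.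
have eAB : horner_mx H Abar + horner_mx H Bbar = (2%:M - A) *m hM.
  by rewrite /Abar rmorphB /= subrK rmorphM rmorphB /= eA horner_mx_C mulmxE.
exists Abar, Bbar => n n0.
have [HP HQ] := HAB n n0.
have n1 : n.+1%:R != 0 :> R by rewrite pnatr_eq0.
split.
- rewrite eAB HP -scalemxAl -mulmxA hH mulmx1 [2^-1 *: (_ - _)]scalerBr.
  rewrite scale_scalar_mx mulVf ?pnatr_eq0 //.
  rewrite subKr scalerA; congr (_ *: _); field; by rewrite addrC natr1.
- rewrite HQ eBb -mulmxA hH mulmx1 opprD addrA subrr add0r scaleNr scalerN opprK //.
- have st := Hstat n n0; rewrite hE HP HQ in st.
  set th := hM *m q in st.
  have eAb : horner_mx H Abar = (2%:M - A) *m hM - (1%:M + B) *m hM.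
    by rewrite -eAB eBb addrK.
  rewrite eAb eBb -mulmxBl [n%:R *: _]scalemxAl -mulmxDl scalemxAl -mulmxA -/th.
  have -> : horner_mx H (Rc n) *m q =
     (1%:M - (n%:R / n.+1%:R) *: A - ((n%:R - 1) / n.+1%:R) *: B) *m th.
    rewrite !mulmxBl mul1mx {1}st.
    set X := _ *m th in st *; set Y := _ *m th in st *.
    by rewrite [X + Y + _]addrC addrA (addrAC _ Y) !addrK.
  congr (_ *m _); apply/matrixP => i j; rewrite !mxE.
  case: (i == j) => /=; field; by rewrite addrC natr1.

Qed.
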